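(* With $A_1[n]$ defined below, for $n=1,2,\dots$, $$A_1[n]=\frac{n+1}{18}\binom{3n+4}{n+1}\Bigl(F(1,-n-1;2n+4;-2)-\frac{4n+6}{3n+4}\Bigr),$$ where $F(a,b;c;z)$ is the Gauss hypergeometric function.
   Context: $A_0(z)$ is the unique function holomorphic near $z=0$ with $A_0(0)=0$ and $z(1+A_0(z))^3=A_0(z)$, and $A_1(z)=-A_0(z)\left(\frac{1+A_0(z)}{1-2A_0(z)}\right)^4$. The numbers $A_1[n]$ are defined by $A_1(z)=-\sum_{n\ge1}A_1[n]z^n$. *)

(* Defs.v *)
From mathcomp Require Import all_boot all_order all_algebra.
Set Implicit Arguments. Unset Strict Implicit. Unset Printing Implicit Defensive.
Import Order.TTheory GRing.Theory Num.Theory.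
Local Open Scope ring_scope.

Definition fps := nat -> rat.

Definition fone : fps := fun n => (n == 0)%N%:R.
Definition fX : fps := fun n => (n == 1)%N%:R.
Definition fmul (f g : fps) : fps :=
  fun n => \sum_(i < n.+1) f i * g (n - i)%N.
Definition fexp (f : fps) (k : nat) : fps := iter k (fmul f) fone.

Definition poch (x : rat) (k : nat) : rat := \prod_(i < k) (x + i%:R).

(* Gauss hypergeometric function F(a, -m; c; z) with second upper parameter
   a nonpositive integer -m, for which the series terminates (terms with
   k > m vanish since (-m)_k = 0). *)
Definition hyp2F1_term (a : rat) (m : nat) (c z : rat) : rat :=
  \sum_(k < m.+1) poch a k * poch (- m%:R) k / (poch c k * k`!%:R) * z ^+ k.

(* Main.v *)
Require Import Defs.
From HB Require Import structures.
From mathcomp Require Import all_boot all_order all_algebra.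
From mathcomp Require Import boolp.
From mathcomp Require Import ring zify.
Import Order.TTheory GRing.Theory Num.Theory.
Local Open Scope ring_scope.

Record ps := PS { psc : nat -> rat }.

HB.instance Definition _ := gen_eqMixin ps.
HB.instance Definition _ := gen_choiceMixin ps.

Lemma ps_ext (f g : ps) : (forall n, psc f n = psc g n) -> f = g.
Proof. case: f => f; case: g => g /= H. by rewrite (funext H). Qed.

Definition ps0 := PS (fun _ => 0).
Definition psopp f := PS (fun n => - psc f n).
Definition psadd f g := PS (fun n => psc f n + psc g n).
Lemma psaddA : associative psadd.
Proof. by move=> f g h; apply: ps_ext => n /=; rewrite addrA. Qed.
Lemma psaddC : commutative psadd.
Proof. by move=> f g; apply: ps_ext => n /=; rewrite addrC. Qed.
Lemma ps0add : left_id ps0 psadd.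
Proof. by move=> f; apply: ps_ext => n /=; rewrite add0r. Qed.
Lemma psaddN : left_inverse ps0 psopp psadd.
Proof. by move=> f; apply: ps_ext => n /=; rewrite addNr. Qed.
HB.instance Definition _ := GRing.isZmodule.Build ps psaddA psaddC ps0add psaddN.

Definition tp (n : nat) (f : ps) : {poly rat} := \poly_(i < n.+1) psc f i.

Lemma tpE n f i : (i <= n)%N -> (tp n f)`_i = psc f i.
Proof. by move=> H; rewrite /tp coef_poly ltnS H. Qed.

Lemma coefM_agree (p p2 q q2 : {poly rat}) n :
  (forall i, (i <= n)%N -> p`_i = p2`_i) ->
  (forall i, (i <= n)%N -> q`_i = q2`_i) -> (p * q)`_n = (p2 * q2)`_n.
Proof.
move=> Hp Hq; rewrite !coefM; apply: eq_bigr => [[j Hj]] _ /=.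
by rewrite Hp -1?ltnS // Hq // leq_subr.
Qed.

Definition psmul f g := PS (fmul (psc f) (psc g)).

Lemma psmul_coef f g n : psc (psmul f g) n = (tp n f * tp n g)`_n.
Proof.
rewrite /= /fmul coefM; apply: eq_bigr => [[j Hj]] _ /=.
by rewrite !tpE ?leq_subr // -ltnS.
Qed.

Lemma tp_mul f g n i : (i <= n)%N -> (tp n (psmul f g))`_i = (tp n f * tp n g)`_i.
Proof.
move=> Hi; rewrite tpE // psmul_coef; apply: coefM_agree => k Hk;
  rewrite !tpE //; exact: leq_trans Hk Hi.
Qed.

Lemma psmulA : associative psmul.
Proof.
move=> f g h; apply: ps_ext => n.
have E1 : (tp n f * tp n (psmul g h))`_n = (tp n f * (tp n g * tp n h))`_n.
  by apply: coefM_agree => // i Hi; rewrite tp_mul.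
have E2 : (tp n (psmul f g) * tp n h)`_n = (tp n f * tp n g * tp n h)`_n.
  by apply: coefM_agree => // i Hi; rewrite tp_mul.
by rewrite psmul_coef [RHS]psmul_coef E1 E2 mulrA.
Qed.

Lemma psmulC : commutative psmul.
Proof. by move=> f g; apply: ps_ext => n; rewrite !psmul_coef mulrC. Qed.

Definition ps1 := PS fone.

Lemma tp1 n : tp n ps1 = 1.
Proof.
apply/polyP => i; rewrite /tp coef_poly coef1 /= /fone.
by case: i => [|i] //=; case: ifP.
Qed.

Lemma ps1mul : left_id ps1 psmul.
Proof.
move=> f; apply: ps_ext => n; rewrite psmul_coef tp1 mul1r tpE //.
Qed.

Lemma psmulDl : left_distributive psmul psadd.
Proof.
move=> f g h; apply: ps_ext => n /=; rewrite /fmul -big_split /=.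
by apply: eq_bigr => i _; rewrite mulrDl.
Qed.

Lemma ps1_neq0 : ps1 != 0.
Proof.
apply/eqP => H; have := congr1 (fun f => psc f 0) H.
by rewrite /= /fone /=.
Qed.

HB.instance Definition _ := GRing.Zmodule_isComNzRing.Build ps
  psmulA psmulC ps1mul psmulDl ps1_neq0.


Lemma pscD f g n : psc (f + g) n = psc f n + psc g n. Proof. by []. Qed.
Lemma pscN f n : psc (- f) n = - psc f n. Proof. by []. Qed.
Lemma pscB f g n : psc (f - g) n = psc f n - psc g n. Proof. by []. Qed.
Lemma psc0 n : psc 0 n = 0. Proof. by []. Qed.
Lemma psc1 n : psc 1 n = (n == 0)%N%:R. Proof. by []. Qed.
Lemma psc_sum I (r : seq I) (P : pred I) (F : I -> ps) n :
  psc (\sum_(i <- r | P i) F i) n = \sum_(i <- r | P i) psc (F i) n.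
Proof. by apply: (big_morph (fun f => psc f n)) => //. Qed.
Lemma psc_mulrn f k n : psc (f *+ k) n = psc f n *+ k.
Proof. by elim: k => [|k IH]; rewrite ?mulr0n // !mulrS pscD IH. Qed.
Lemma psc_natM k f n : psc (k%:R * f) n = k%:R * psc f n.
Proof. by rewrite mulr_natl psc_mulrn mulr_natl. Qed.
Lemma pscM f g n : psc (f * g) n = \sum_(i < n.+1) psc f i * psc g (n - i).
Proof. by []. Qed.
Lemma psc_mul0 f g : psc (f * g) 0 = psc f 0 * psc g 0.
Proof. by rewrite pscM big_ord1. Qed.
Lemma psc_exp0 f k : psc (f ^+ k) 0 = psc f 0 ^+ k.
Proof. by elim: k => [|k IH]; rewrite ?expr0 // !exprS psc_mul0 IH. Qed.

Lemma psc_mul_agree F F2 G G2 m :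
  (forall i, (i <= m)%N -> psc F i = psc F2 i) ->
  (forall i, (i <= m)%N -> psc G i = psc G2 i) ->
  psc (F * G) m = psc (F2 * G2) m.
Proof.
move=> HF HG; rewrite !pscM; apply: eq_bigr => [[i Hi]] _ /=.
by rewrite HF -1?ltnS // HG // leq_subr.
Qed.

Definition X : ps := PS fX.

Lemma tpX n : tp n.+1 X = 'X.
Proof.
apply/polyP => i; rewrite /tp coef_poly coefX /= /fX.
case: i => [|[|i]] //=; try by case: ifP.
Qed.

Lemma pscXM f n : psc (X * f) n = if n is n'.+1 then psc f n' else 0.
Proof.
case: n => [|n]; first by rewrite psc_mul0 /= /fX mul0r.
rewrite psmul_coef tpX coefXM /= tpE //.
Qed.

Lemma pscXnM j f m : psc (X ^+ j * f) m = if (j <= m)%N then psc f (m - j) else 0.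
Proof.
elim: j m => [|j IH] m; first by rewrite expr0 mul1r subn0.
rewrite exprS -mulrA pscXM; case: m => [|m] //; by rewrite ?IH ?ltnS ?subSS.
Qed.

Lemma psc_binom N k : psc ((1 + X) ^+ N) k = ('C(N, k))%:R.
Proof.
elim: N k => [|N IH] k; first by rewrite expr0 psc1; case: k.
rewrite exprS mulrDl mul1r pscD pscXM IH.
case: k => [|k]; first by rewrite !bin0 addr0.
by rewrite IH binS natrD addrC.
Qed.

Definition W : ps := PS (fun k => 2 ^+ k).
Lemma W_inv : W * (1 - 2%:R * X) = 1.
Proof.
apply: ps_ext => n; rewrite mulrBr mulr1 pscB mulrCA psc_natM (mulrC W X) pscXM psc1.
case: n => [|n] /=; first by rewrite mulr0 subr0 expr0.
by rewrite exprS subrr.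
Qed.

Definition V : ps := PS (fun k => (-1) ^+ k).
Lemma V_inv : (1 + X) * V = 1.
Proof.
apply: ps_ext => n; rewrite mulrDl mul1r pscD pscXM psc1.
case: n => [|n] /=; first by rewrite addr0 expr0.
by rewrite exprS mulN1r addNr.
Qed.

Definition D (f : ps) : ps := PS (fun k => psc f k.+1 *+ k.+1).
Lemma pscDer f n : psc (D f) n = psc f n.+1 *+ n.+1. Proof. by []. Qed.

Lemma tp_deriv f n i : (i <= n)%N -> ((tp n.+1 f)^`())`_i = (tp n (D f))`_i.
Proof. by move=> Hi; rewrite coef_deriv !tpE. Qed.

Lemma D_mul f g : D (f * g) = D f * g + f * D g.
Proof.
apply: ps_ext => n; rewrite pscDer psmul_coef -coef_deriv derivM coefD pscD.
rewrite !psmul_coef; congr (_ + _); apply: coefM_agree => i Hi;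
  by rewrite ?tp_deriv ?tpE // (leq_trans Hi).
Qed.

Lemma D_zmod : zmod_morphism D.
Proof. by move=> f g; apply: ps_ext => n; rewrite !pscDer !pscB mulrnBl. Qed.
Lemma D_sub f g : D (f - g) = D f - D g. Proof. exact: D_zmod. Qed.
Lemma D_add f g : D (f + g) = D f + D g.
Proof. by apply: ps_ext => n; rewrite !pscDer !pscD mulrnDl. Qed.

Lemma D1 : D 1 = 0.
Proof. by apply: ps_ext => n; rewrite pscDer psc1 /= mul0rn. Qed.
Lemma DX : D X = 1.
Proof. by apply: ps_ext => [[|n]]; rewrite pscDer psc1 //= mul0rn. Qed.
Lemma Dnat k : D k%:R = 0.
Proof. by apply: ps_ext => n; rewrite pscDer psc_mulrn psc1 /= !mul0rn. Qed.
Lemma D_exp f k : D (f ^+ k.+1) = k.+1%:R * f ^+ k * D f.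
Proof.
elim: k => [|k IH]; first by rewrite expr1 expr0 mulr1 mul1r.
rewrite exprS D_mul IH exprS; ring.
Qed.

Definition shift (f : ps) : ps := PS (fun k => psc f k.+1).
Lemma shiftE f : psc f 0 = 0 -> f = X * shift f.
Proof. by move=> H; apply: ps_ext => [[|n]]; rewrite pscXM. Qed.

Lemma val_exp (al f : ps) j m : psc al 0 = 0 -> (m < j)%N -> psc (al ^+ j * f) m = 0.
Proof.
move=> H0 Hm; rewrite (@shiftE al H0) exprMn -mulrA pscXnM.
by rewrite leqNgt Hm.
Qed.

Definition cst (c : rat) : ps := PS (fun k => (k == 0)%N%:R * c).
Lemma psc_cstM c f n : psc (cst c * f) n = c * psc f n.
Proof.
rewrite pscM big_ord_recl /= mul1r subn0 big1 ?addr0 // => i _.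
by rewrite /= mul0r mul0r.
Qed.
Lemma cstD x y : cst (x + y) = cst x + cst y.
Proof. by apply: ps_ext => n; rewrite pscD /= mulrDr. Qed.
Lemma cst0 : cst 0 = 0.
Proof. by apply: ps_ext => n; rewrite /= mulr0. Qed.
Lemma cst1 : cst 1 = 1.
Proof. by apply: ps_ext => n; rewrite /= mulr1. Qed.
Lemma cstM x y : cst (x * y) = cst x * cst y.
Proof. by apply: ps_ext => n; rewrite psc_cstM /= mulrCA. Qed.
Lemma cst_sum (I : Type) (r : seq I) (P : pred I) (F : I -> rat) :
  cst (\sum_(i <- r | P i) F i) = \sum_(i <- r | P i) cst (F i).
Proof. by apply: (big_morph cst cstD cst0). Qed.

Lemma sum_trunc (F : nat -> rat) M m : (m < M)%N -> (forall j, (m < j)%N -> F j = 0) ->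
  \sum_(j < M) F j = \sum_(j < m.+1) F j.
Proof.
move=> Hm HF; rewrite -(subnKC Hm) big_split_ord /= [X in _ + X]big1 ?addr0 // => i _.
by apply: HF; rewrite ltnS leq_addr.
Qed.

Section Lagrange.
Variable al : ps.
Hypothesis Hal : X * (1 + al) ^+ 3 = al.

Lemma Hal0 : psc al 0 = 0.
Proof. by rewrite -Hal pscXM. Qed.

Definition Q (m : nat) : ps := (1 + X) ^+ (3 * m) * (1 - 2%:R * X) * V.

Lemma lagrange m j : psc (al ^+ j) m = psc (X ^+ j * Q m) m.
Proof.
elim: m j => [|m IH] j.
  rewrite pscXnM; case: j => [|j].
    rewrite expr0 psc1 (_ : (0 <= 0)%N = true) // subn0 /Q muln0 expr0 mul1r.
    rewrite !psc_mul0 pscB psc1 psc_natM (_ : psc X 0 = 0) // (_ : psc V 0 = 1) //.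
  by rewrite -[al ^+ j.+1]mulr1 val_exp // Hal0.
case: j => [|j].
  rewrite expr0 mul1r psc1 (_ : (m.+1 == 0)%N = false) //.
  have -> : Q m.+1 = (1 + X) ^+ (3 * m + 2) * (1 - 2%:R * X) * ((1 + X) * V).
    rewrite /Q (_ : (3 * m.+1 = (3 * m + 2).+1)%N); last by lia.
    rewrite exprS; ring.
  rewrite V_inv mulr1 mulrBr mulr1 pscB.
  rewrite (_ : (1 + X) ^+ (3 * m + 2) * (2%:R * X) = 2%:R * (X * (1 + X) ^+ (3 * m + 2))); last by ring.
  rewrite psc_natM pscXM !psc_binom.
  have := mul_bin_left (3 * m + 2) m.
  rewrite (_ : (3 * m + 2 - m = m.+1 * 2)%N); last by lia.
  rewrite -mulnA => /eqP; rewrite eqn_mul2l /= => /eqP ->.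
  by rewrite natrM subrr.
have E1 : al ^+ j.+1 = X * (al ^+ j + 3%:R * al ^+ j.+1 + 3%:R * al ^+ j.+2 + al ^+ j.+3).
  transitivity (al ^+ j * (X * (1 + al) ^+ 3)); first by rewrite Hal exprSr.
  rewrite !exprS; ring.
have E2 : X ^+ j.+1 * Q m.+1 = X * (X ^+ j * Q m + 3%:R * (X ^+ j.+1 * Q m)
            + 3%:R * (X ^+ j.+2 * Q m) + X ^+ j.+3 * Q m).
  rewrite /Q mulnS exprD !exprS; ring.
by rewrite E1 E2 !pscXM !pscD !psc_natM !IH.
Qed.

Definition Phi (f : ps) : ps := PS (fun m => \sum_(j < m.+1) psc f j * psc (al ^+ j) m).

Lemma pscPhi f m : psc (Phi f) m = \sum_(j < m.+1) psc f j * psc (al ^+ j) m.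
Proof. by []. Qed.

Definition Ep (M : nat) (f : ps) : {poly ps} := \poly_(j < M) cst (psc f j).

Lemma Ep_horner M f m : (m < M)%N -> psc (Ep M f).[al] m = psc (Phi f) m.
Proof.
move=> Hm; rewrite horner_poly psc_sum.
rewrite (eq_bigr (fun j : 'I_M => psc f j * psc (al ^+ j) m)); last first.
  by move=> j _; rewrite psc_cstM.
rewrite (@sum_trunc (fun j => psc f j * psc (al ^+ j) m) M m) //.
by move=> j Hj; rewrite -[al ^+ j]mulr1 val_exp ?mulr0 // Hal0.
Qed.

Lemma Ep_mul M f g : take_poly M (Ep M f * Ep M g) = Ep M (f * g).
Proof.
apply/polyP => i; rewrite coef_take_poly coef_poly; case: ifP => Hi //.
rewrite coefM pscM cst_sum; apply: eq_bigr => [[k Hk]] _ /=.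
rewrite !coef_poly cstM.
have H1 : (k < M)%N by apply: leq_ltn_trans Hi; rewrite -ltnS.
have H2 : (i - k < M)%N by apply: leq_ltn_trans Hi; rewrite leq_subr.
by rewrite H1 H2.
Qed.

Lemma Phi_mul f g : Phi (f * g) = Phi f * Phi g.
Proof.
apply: ps_ext => m.
rewrite -(@Ep_horner m.+1) // -Ep_mul.
set P := Ep m.+1 f * Ep m.+1 g.
have -> : (take_poly m.+1 P).[al] = P.[al] - al ^+ m.+1 * (drop_poly m.+1 P).[al].
  by rewrite -{2}(poly_take_drop m.+1 P) hornerD hornerM hornerXn mulrC addrK.
rewrite pscB val_exp ?Hal0 // subr0 /P hornerM.
by apply: psc_mul_agree => i Hi; rewrite Ep_horner.
Qed.

Lemma Phi_sub f g : Phi (f - g) = Phi f - Phi g.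
Proof.
apply: ps_ext => m; rewrite pscB !pscPhi -sumrB; apply: eq_bigr => j _.
by rewrite pscB mulrBl.
Qed.

Lemma Phi_add f g : Phi (f + g) = Phi f + Phi g.
Proof.
apply: ps_ext => m; rewrite pscD !pscPhi -big_split; apply: eq_bigr => j _.
by rewrite pscD mulrDl.
Qed.

Lemma Phi1 : Phi 1 = 1.
Proof.
apply: ps_ext => m; rewrite -(@Ep_horner m.+1) //.
rewrite (_ : Ep m.+1 1 = 1) ?hornerC //.
apply/polyP => i; rewrite coef_poly coef1 psc1.
by case: i => [|i] /=; rewrite ?cst1 ?cst0 //; case: ifP.
Qed.

Lemma PhiX : Phi X = al.
Proof.
apply: ps_ext => m; rewrite -(@Ep_horner m.+2) //.
rewrite (_ : Ep m.+2 X = 'X) ?hornerX //.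
apply/polyP => i; rewrite coef_poly coefX /= /fX.
by case: i => [|[|i]] /=; rewrite ?cst1 ?cst0 //; case: ifP.
Qed.

Lemma Phi_opp f : Phi (- f) = - Phi f.
Proof.
apply: ps_ext => m; rewrite pscN !pscPhi -sumrN; apply: eq_bigr => j _.
by rewrite pscN mulNr.
Qed.

Lemma Phi_exp f k : Phi (f ^+ k) = Phi f ^+ k.
Proof.
by elim: k => [|k IH]; rewrite ?expr0 ?Phi1 // !exprS Phi_mul IH.
Qed.

Lemma Phi_nat k : Phi k%:R = k%:R.
Proof.
elim: k => [|k IH]; last by rewrite -natr1 Phi_add IH Phi1.
have E : (0%:R : ps) = 1 - 1 by rewrite subrr.
by rewrite E Phi_sub Phi1.
Qed.

End Lagrange.

Lemma uniq_inv d U : d * U = 0 -> psc U 0 = 1 -> d = 0.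
Proof.
move=> H U0; apply: ps_ext => n; rewrite psc0.
elim/ltn_ind: n => n IH.
have := congr1 (fun f => psc f n) H; rewrite psc0 pscM big_ord_recr /= subnn U0 mulr1.
have -> : \sum_(i < n) psc d i * psc U (n - i) = 0.
  by apply: big1 => i _; rewrite IH ?mul0r.
by rewrite add0r.
Qed.

Lemma cubic (R : comRingType) (u w a0 a1 a2 a3 : R) :
  u * w = 1 -> a0 * u ^+ 3 + a1 * u ^+ 2 + a2 * u + a3 = 0 ->
  a0 + a1 * w + a2 * w ^+ 2 + a3 * w ^+ 3 = 0.
Proof.
move=> Huw H.
have E : a0 + a1 * w + a2 * w ^+ 2 + a3 * w ^+ 3
   = w ^+ 3 * (a0 * u ^+ 3 + a1 * u ^+ 2 * (u * w) + a2 * u * (u * w) ^+ 2 + a3 * (u * w) ^+ 3)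
     * (u * w) ^+ 0 + (a0 + a1 * w + a2 * w ^+ 2 + a3 * w ^+ 3) * (1 - (u * w) ^+ 3).
  ring.
by rewrite E Huw !expr1n !mulr1 H mulr0 subrr mulr0 addr0.
Qed.

Lemma W_inv' : (1 - 2%:R * X) * W = 1.
Proof. by rewrite mulrC W_inv. Qed.

Lemma DW : D W = 2%:R * W ^+ 2.
Proof.
have H : D W * (1 - 2%:R * X) = 2%:R * W.
  have := congr1 D W_inv; rewrite D_mul D1 D_sub D1 D_mul Dnat DX.
  move/eqP; rewrite addr_eq0 => /eqP ->; ring.
transitivity (D W * (W * (1 - 2%:R * X))); first by rewrite W_inv mulr1.
by rewrite mulrCA mulrC H; ring.
Qed.

Lemma key_id n :
  18%:R * psc (X * (1 + X) ^+ (3 * n + 3) * W ^+ 3) n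
  = (n.+1)%:R * psc ((1 + X) ^+ (3 * n + 4) * W) n.+1
    - (4 * n + 6)%:R * ('C(3 * n + 3, n))%:R.
Proof.
set Z3 := (1 + X) ^+ (3 * n + 3).
set Y := (1 + X) ^+ (3 * n + 4).
have HY : Y = (1 + X) * Z3 by rewrite /Y /Z3 (_ : (3 * n + 4 = (3 * n + 3).+1)%N) ?exprS //; lia.
set P : ps := 1 - 3%:R * X + 8%:R * X ^+ 2.
have DY : D Y = (3 * n + 4)%:R * Z3.
  rewrite /Y (_ : (3 * n + 4 = (3 * n + 3).+1)%N); last by lia.
  rewrite D_exp D_add D1 DX add0r mulr1 (_ : (3 * n + 3).+1 = 3 * n + 4)%N //; lia.
have DP : D P = - 3%:R + 16%:R * X.
  rewrite /P D_add D_sub D1 !D_mul !Dnat !DX; ring.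
have DW2 : D (W ^+ 2) = 4%:R * W ^+ 3.
  rewrite D_exp DW; ring.
set G := Y * P * W ^+ 2.
have DG : D G = (3 * n + 4)%:R * Z3 * P * W ^+ 2 + Y * (- 3%:R + 16%:R * X) * W ^+ 2
                + Y * P * (4%:R * W ^+ 3).
  by rewrite /G D_mul DW2 D_mul DY DP; ring.
have Eid : X * D G - (n.+1)%:R * G
   = 18%:R * (X * (X * Z3 * W ^+ 3)) - (n.+1)%:R * (Y * W) + (4 * n + 6)%:R * (X * Z3).
  apply/eqP; rewrite -subr_eq0; apply/eqP.
  rewrite (_ : X * D G - (n.+1)%:R * G - _ =
     (- ((4 * n + 6)%:R * X * Z3)) + ((n.+1)%:R * (1 + X) * Z3) * W
     + (Z3 * (X * (3 * n + 4)%:R * P + X * (1 + X) * (- 3%:R + 16%:R * X)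
              - (n.+1)%:R * (1 + X) * P)) * W ^+ 2
     + (Z3 * (4%:R * X * (1 + X) * P - 18%:R * X ^+ 2)) * W ^+ 3); last first.
    by rewrite DG /G HY; ring.
  apply: (@cubic _ (1 - 2%:R * X) W); first exact: W_inv'.
  rewrite /P; ring.
have := congr1 (fun f => psc f n.+1) Eid.
rewrite pscB pscXM pscDer psc_natM mulr_natl subrr.
rewrite pscD pscB !psc_natM !pscXM /Z3 psc_binom.
set S := psc _ n; set T := psc _ n.+1.
move=> H; apply/eqP; rewrite -subr_eq0; apply/eqP.
rewrite (_ : 18%:R * S - ((n.+1)%:R * T - (4 * n + 6)%:R * ('C(3 * n + 3, n))%:R)
           = 18%:R * S - (n.+1)%:R * T + (4 * n + 6)%:R * ('C(3 * n + 3, n))%:R); last by ring.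
by rewrite -H.
Qed.

Lemma poch0 x : poch x 0 = 1.
Proof. by rewrite /poch big_ord0. Qed.
Lemma pochS x k : poch x k.+1 = poch x k * (x + k%:R).
Proof. by rewrite /poch big_ord_recr. Qed.
Lemma poch1 k : poch 1 k = (k`!)%:R.
Proof.
elim: k => [|k IH]; first by rewrite poch0.
by rewrite pochS IH factS natrM -natr1; ring.
Qed.
Lemma poch_nat_neq0 c k : poch (c.+1)%:R k != 0.
Proof.
elim: k => [|k IH]; first by rewrite poch0 oner_eq0.
by rewrite pochS mulf_neq0 // -natrD pnatr_eq0.
Qed.

Lemma poch_key m c k : (k <= m)%N ->
  ('C(m + c, m))%:R * poch (- m%:R) k / poch (c.+1)%:R k
  = (-1) ^+ k * ('C(m + c, m - k))%:R :> rat.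
Proof.
elim: k => [|k IH] Hk; first by rewrite !poch0 expr0 subn0 mulr1 invr1 mulr1 mul1r.
have Hk' : (k <= m)%N by apply: ltnW.
have Hb : ('C(m + c, m - k) * (m - k))%N = ('C(m + c, m - k.+1) * (c + k.+1))%N.
  have := mul_bin_left (m + c) (m - k.+1).
  rewrite (_ : (m - k.+1).+1 = m - k)%N; last by lia.
  rewrite (_ : (m + c - (m - k.+1) = c + k.+1)%N); last by lia.
  by rewrite mulnC => ->; rewrite mulnC.
have Hb' : ('C(m + c, m - k))%:R * (m - k)%:R = ('C(m + c, m - k.+1))%:R * (c + k.+1)%:R :> rat.
  by rewrite -!natrM Hb.
have Hmk : - m%:R + k%:R = - (m - k)%:R :> rat by rewrite natrB // opprB addrC.
have Hck : (c.+1)%:R + k%:R = (c + k.+1)%:R :> rat by rewrite -natrD addSn addnS.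
have Hnz := poch_nat_neq0 c k.
have Hnz2 : (c + k.+1)%:R != 0 :> rat by rewrite pnatr_eq0 addnS.
rewrite !pochS Hmk Hck.
transitivity (('C(m + c, m))%:R * poch (- m%:R) k / poch (c.+1)%:R k * (- (m - k)%:R / (c + k.+1)%:R)).
  by field; rewrite Hnz andbT (_ : c%:R + (1 + k%:R) = (c + k.+1)%:R :> rat) // natrD mulrS.
rewrite IH // exprS.
apply: (mulIf Hnz2).
rewrite -[RHS]mulrA -Hb'.
by field; rewrite (_ : c%:R + (1 + k%:R) = (c + k.+1)%:R :> rat) // natrD mulrS.
Qed.

Lemma hyp_sum n :
  ('C(3 * n + 4, n.+1))%:R * hyp2F1_term 1 n.+1 (2 * n + 4)%:R (-2)
  = \sum_(k < n.+2) 2 ^+ k * ('C(3 * n + 4, n.+1 - k))%:R.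
Proof.
rewrite /hyp2F1_term mulr_sumr; apply: eq_bigr => [[k Hk]] _ /=.
rewrite (_ : (2 * n + 4 = (2 * n + 3).+1)%N); last by lia.
rewrite (_ : (3 * n + 4 = n.+1 + (2 * n + 3))%N); last by lia.
rewrite poch1.
have Hk' : (k <= n.+1)%N by [].
have Hnz := poch_nat_neq0 (2 * n + 3) k.
have Hf : (k`!)%:R != 0 :> rat by rewrite pnatr_eq0 -lt0n fact_gt0.
transitivity (('C(n.+1 + (2 * n + 3), n.+1))%:R * poch (- (n.+1)%:R) k
               / poch ((2 * n + 3).+1)%:R k * (-2) ^+ k).
  by field; rewrite Hnz Hf.
rewrite poch_key // mulrC mulrA -exprMn mulrN1 opprK.
by [].
Qed.

Lemma fexp_ps f k n : fexp f k n = psc ((PS f) ^+ k) n.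
Proof.
elim: k n => [|k IH] n; first by rewrite expr0.
change (fmul f (fexp f k) n = psc (PS f ^+ k.+1) n).
by rewrite exprS pscM /fmul; apply: eq_bigr => i _; rewrite IH.
Qed.

Lemma nz34 n : (3 * n%:R + 4 : rat) != 0.
Proof.
rewrite (_ : 3 * n%:R + 4 = (3 * n + 4)%:R :> rat); first by rewrite pnatr_eq0 addn4.
by rewrite natrD natrM.
Qed.

Theorem proposition6 (a b : fps) :
  a 0%N = 0 ->
  (forall n, fmul fX (fexp (fun k => fone k + a k) 3) n = a n) ->
  (forall n, fmul b (fexp (fun k => fone k - 2 * a k) 4) n
             = - fmul a (fexp (fun k => fone k + a k) 4) n) ->
  forall n : nat, (1 <= n)%N ->
    - b n = (n.+1)%:R / 18 * ('C(3 * n + 4, n.+1))%:R *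
            (hyp2F1_term 1 n.+1 (2 * n + 4)%:R (-2)
             - (4 * n + 6)%:R / (3 * n + 4)%:R).
Proof.
move=> a0 H1 H2 n Hn.
pose al := PS a; pose be := PS b.
have E1 : PS (fun k => fone k + a k) = 1 + al by apply: ps_ext.
have E2 : PS (fun k => fone k - 2 * a k) = 1 - 2%:R * al.
  by apply: ps_ext => k; rewrite pscB psc_natM.
have Hal : X * (1 + al) ^+ 3 = al.
  apply: ps_ext => k; rewrite -[RHS](H1 k) pscM /fmul; apply: eq_bigr => i _.
  by rewrite fexp_ps E1.
have Hb : be * (1 - 2%:R * al) ^+ 4 = - (al * (1 + al) ^+ 4).
  have E3 : psc ((1 - 2%:R * al) ^+ 4) = fexp (fun k => fone k - 2 * a k) 4.
    by apply: funext => j; rewrite fexp_ps E2.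
  have E4 : psc ((1 + al) ^+ 4) = fexp (fun k => fone k + a k) 4.
    by apply: funext => j; rewrite fexp_ps E1.
  apply: ps_ext => k; rewrite pscN !pscM E3 E4.
  exact: H2.
pose H : ps := - (X * (1 + X) ^+ 4 * W ^+ 4).
have HU : H * (1 - 2%:R * X) ^+ 4 = - (X * (1 + X) ^+ 4).
  transitivity (- (X * (1 + X) ^+ 4) * (W * (1 - 2%:R * X)) ^+ 4); first by rewrite /H; ring.
  by rewrite W_inv expr1n mulr1.
have Hphi : Phi al H * (1 - 2%:R * al) ^+ 4 = - (al * (1 + al) ^+ 4).
  rewrite (_ : (1 - 2%:R * al) ^+ 4 = Phi al ((1 - 2%:R * X) ^+ 4)); last first.
    by rewrite Phi_exp // Phi_sub // Phi1 // Phi_mul // Phi_nat // PhiX.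
  rewrite -Phi_mul // HU Phi_opp Phi_mul // PhiX // Phi_exp // Phi_add // Phi1 // PhiX //.
have Eb : be = Phi al H.
  apply/eqP; rewrite -subr_eq0; apply/eqP.
  apply: (@uniq_inv _ ((1 - 2%:R * al) ^+ 4)).
    by rewrite mulrBl Hb Hphi subrr.
  by rewrite psc_exp0 pscB psc1 psc_natM (@Hal0 al Hal) mulr0 subr0 expr1n.
have Sb : - b n = psc (X * (1 + X) ^+ (3 * n + 3) * W ^+ 3) n.
  have -> : b n = psc be n by [].
  rewrite Eb pscPhi.
  rewrite (eq_bigr (fun j : 'I_n.+1 => psc H j * psc (Q n) (n - j))); last first.
    move=> [j Hj] _ /=; rewrite (@lagrange al Hal) pscXnM.
    by rewrite -ltnS Hj.
  rewrite -pscM.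
  have -> : H * Q n = - (X * (1 + X) ^+ (3 * n + 3) * W ^+ 3).
    rewrite /H /Q exprD.
    transitivity (- (X * ((1 + X) ^+ (3 * n) * (1 + X) ^+ 3) * W ^+ 3)
                  * ((1 + X) * V) * (W * (1 - 2%:R * X))); first by ring.
    by rewrite V_inv W_inv !mulr1.
  by rewrite pscN opprK.
have K := key_id n.
have Hh := hyp_sum n.
have Hbin : (n.+1)%:R * ('C(3 * n + 4, n.+1))%:R = (3 * n + 4)%:R * ('C(3 * n + 3, n))%:R :> rat.
  rewrite -!natrM; congr (_ %:R).
  have := mul_bin_diag (3 * n + 4) n.
  by rewrite (_ : (3 * n + 4).-1 = 3 * n + 3)%N ?addnS // => ->.
set S := psc _ n in Sb K.
set T := psc _ n.+1 in K.
have HT : T = \sum_(k < n.+2) 2 ^+ k * ('C(3 * n + 4, n.+1 - k))%:R.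
  rewrite /T mulrC pscM; apply: eq_bigr => k _; by rewrite psc_binom.
set F := hyp2F1_term _ _ _ _ in Hh *.
set C4 := ('C(3 * n + 4, n.+1))%:R in Hh Hbin *.
set C3 := ('C(3 * n + 3, n))%:R in K Hbin.
have HS : S = ((n.+1)%:R * (C4 * F) - (4 * n + 6)%:R * C3) / 18.
  by rewrite Hh -HT -K; field.
have HC3 : C3 = (n.+1)%:R * C4 / (3 * n + 4)%:R.
  by rewrite Hbin; field; exact: nz34.
by rewrite Sb HS HC3; field; exact: nz34.
Qed.
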